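(* Let $T_1,T_2$ be unordered increasing trees with disjoint vertex-sets, let $v_1\in V(T_1)$, $v_2\in V(T_2)$ with $v_1>v_2$, and let $R=\mathrm{spl}(T_1,v_1;T_2,v_2)$. Then: (a) For $\ell\in\{1,2\}$ and any vertices $i,j$ of $T_\ell$, $i$ is an ancestor of $j$ in $T_\ell$ if and only if $i$ is an ancestor of $j$ in $R$. Consequently, given the sets $V(T_1)$ and $V(T_2)$, the trees $T_1$ and $T_2$ can be recovered from $R$. (b) For every vertex $i$ of $T_1$, $\sigma_i(R)=\sigma_i(T_1)$; moreover $\sigma_{v_2}(R)=\sigma_{v_2}(T_2)+1$, and $\sigma_i(R)=\sigma_i(T_2)$ for every other vertex $i\ne v_2$ of $T_2$.
   Context: An unordered increasing tree is a rooted tree whose vertices are distinct positive integers, sons unordered, each son larger than its father. Ancestors/descendants are defined as usual in the rooted tree. $\sigma_i(T)$ denotes the number of sons of vertex $i$ in $T$. $v$-decomposition: for a vertex $v$ of an unordered increasing tree $T$, let $a_1<a_2<\dots<a_k=v$ be the chain from the root $a_1$ to $v$. Removing the edges of this chain leaves $k$ components, each an unordered increasing tree rooted at some $a_i$; call $T^{(a_i)}$ the component rooted at $a_i$. The list $T^{(a_1)},\dots,T^{(a_k)}$ is the $v$-decomposition of $T$. Splice: let $T_1,T_2$ be unordered increasing trees with disjoint vertex-sets, $v_1\in V(T_1)$, $v_2\in V(T_2)$, $v_1>v_2$, with $v_1$-decomposition $T_1^{(a_1)},\dots,T_1^{(a_k)}$ of $T_1$ and $v_2$-decomposition $T_2^{(b_1)},\dots,T_2^{(b_m)}$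 of $T_2$. Then $\mathrm{spl}(T_1,v_1;T_2,v_2)$ is the unordered increasing tree on $V(T_1)\cup V(T_2)$ obtained by sorting $\{a_1,\dots,a_k\}\cup\{b_1,\dots,b_m\}$ increasingly into $c_1<\dots<c_{k+m}$ (so $c_{k+m}=v_1$), joining these into a chain with $c_1$ the root and $c_{s}$ the father of $c_{s+1}$, and attaching at each $c_s$ the tree among $T_1^{(a_i)},T_2^{(b_j)}$ rooted at $c_s$; equivalently it is the tree whose $v_1$-decomposition is the list of all the $T_1^{(a_i)}$ and $T_2^{(b_j)}$ ordered by their roots. *)

(* Defs.v *)
From mathcomp Require Import all_boot.

Set Implicit Arguments. Unset Strict Implicit. Unset Printing Implicit Defensive.

(* An unordered increasing tree is represented by its (finite, duplicate-free,
   nonempty) vertex set V : seq nat together with a father function p : nat -> nat.  The values of p outside V and at the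
   root are irrelevant (junk). *)

Definition troot (V : seq nat) : nat := \big[minn/head 0 V]_(x <- V) x.

Definition is_inc_tree (V : seq nat) (p : nat -> nat) : Prop :=
  [/\ V != [::], uniq V &
      forall x, x \in V -> x != troot V -> (p x \in V) /\ (p x < x)].

(* i is a (proper) ancestor of j: i is obtained from j by going up k >= 1
   times along the father function, never going above the root.  Such a k is
   at most the number of vertices (a root path visits distinct vertices), so
   the search over k is bounded by size V, which makes the notion boolean. *)
Definition ancestor (V : seq nat) (p : nat -> nat) (i j : nat) : bool :=
  (j \in V) &&
  has (fun k => (iter k p j == i) &&
                all (fun m => iter m p j != troot V) (iota 0 k))
      (iota 1 (size V)).

Definition sons (V : seq nat) (p : nat -> nat) (i : nat) : nat :=
  count (fun x => (x != troot V) && (p x == i)) V.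

Definition chain (V : seq nat) (p : nat -> nat) (v : nat) : seq nat :=
  [seq x <- V | ancestor V p x v || (x == v)].

Definition disjoint_seq (V1 V2 : seq nat) : bool := all (fun x => x \notin V2) V1.

(* The merged chain
   C = {a_1..a_k} u {b_1..b_m} is joined increasingly (the father of a
   non-minimal chain vertex x is the largest chain vertex below x), and every
   component T1^(a_i), T2^(b_j) of the decompositions keeps its edges: the
   edges of T_l that are not chain edges are exactly the edges (x, p_l x)
   with x not on the chain of T_l. *)
Definition spl_par (V1 : seq nat) (p1 : nat -> nat) (v1 : nat)
                   (V2 : seq nat) (p2 : nat -> nat) (v2 : nat) : nat -> nat :=
  fun x =>
    let C := chain V1 p1 v1 ++ chain V2 p2 v2 in
    if x \in C then \max_(c <- C | c < x) c
    else if x \in V1 then p1 x else p2 x.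

Definition spl_vert (V1 V2 : seq nat) : seq nat := V1 ++ V2.

(* Main.v *)
Require Import Defs.
From mathcomp Require Import all_boot.
From mathcomp Require Import zify.

Set Implicit Arguments. Unset Strict Implicit. Unset Printing Implicit Defensive.

Lemma bigmin_props (s : seq nat) (d : nat) :
  (\big[minn/d]_(x <- s) x <= d) /\
  (forall x, x \in s -> \big[minn/d]_(x <- s) x <= x) /\
  (\big[minn/d]_(x <- s) x \in d :: s).
Proof.
elim: s => [|a s [IH1 [IH2 IH3]]]; first by rewrite big_nil inE eqxx.
rewrite big_cons; split; first by rewrite geq_min IH1 orbT.
split.
  move=> x; rewrite inE => /orP [/eqP->|xs]; first by rewrite geq_min leqnn.
  by rewrite geq_min IH2 ?orbT.
rewrite /minn; case: ifP => _; first by rewrite !inE eqxx orbT.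
move: IH3; rewrite !inE => /orP [->|->]; by rewrite ?orbT.
Qed.

Lemma troot_min V x : x \in V -> troot V <= x.
Proof. by case: (bigmin_props V (head 0 V)) => _ [H _] /H. Qed.

Lemma troot_in V : V != [::] -> troot V \in V.
Proof.
case: V => // a V _; have [_ [_ H]] := bigmin_props (a :: V) a.
by move: H; rewrite /troot /= inE => /orP [/eqP ->|//]; rewrite inE eqxx.
Qed.

Definition chainP (V : seq nat) (p : nat -> nat) (C : seq nat) : Prop :=
  [/\ {subset C <= V}, troot V \in C &
      forall j, j \in C -> j != troot V ->
        p j \in C /\ (forall c, c \in C -> c < j -> c <= p j)].

Section Tree.
Variables (V : seq nat) (p : nat -> nat).
Hypothesis HT : is_inc_tree V p.
Local Notation r := (troot V).

Lemma par_in x : x \in V -> x != r -> p x \in V.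
Proof. by case: HT => _ _ H xV x0; case: (H x xV x0). Qed.
Lemma par_lt x : x \in V -> x != r -> p x < x.
Proof. by case: HT => _ _ H xV x0; case: (H x xV x0). Qed.
Lemma root_in : r \in V.
Proof. by case: HT => H _ _; apply: troot_in. Qed.
Lemma uniqV : uniq V.
Proof. by case: HT. Qed.

Lemma iter_dec j k : j \in V -> (forall m, m < k -> iter m p j != r) ->
  forall m, m <= k -> iter m p j \in V.
Proof.
move=> jV H; elim=> [|m IH] mk //=.
apply: par_in; [apply: IH; exact: ltnW | exact: H].
Qed.

Lemma iter_strict j k : j \in V -> (forall m, m < k -> iter m p j != r) ->
  forall m d, m + d.+1 <= k -> iter (m + d.+1) p j < iter m p j.
Proof.
move=> jV H m; elim=> [|d IH] mdk.
  rewrite addn1 /=; apply: par_lt; last (apply: H; lia).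
  apply: (iter_dec jV H); lia.
rewrite addnS /=; apply: ltn_trans (IH _); last lia.
apply: par_lt; last (apply: H; lia).
apply: (iter_dec jV H); lia.
Qed.

Lemma iter_bound j k : j \in V -> (forall m, m < k -> iter m p j != r) ->
  k <= size V.
Proof.
move=> jV H.
have -> : k = size [seq iter m p j | m <- iota 0 k] by rewrite size_map size_iota.
apply: uniq_leq_size.
  rewrite map_inj_in_uniq ?iota_uniq //.
  move=> a b; rewrite !mem_iota /= !add0n => ak bk eq.
  case: (ltngtP a b) => // ab.
    have [d bd] : exists d, b = a + d.+1 by exists (b - a.+1); lia.
    have := iter_strict jV H (m:=a) (d:=d); rewrite -bd eq ltnn; move/(_ (ltnW bk)); by [].
  have [d bd] : exists d, a = b + d.+1 by exists (a - b.+1); lia.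
  have := iter_strict jV H (m:=b) (d:=d); rewrite -bd eq ltnn; move/(_ (ltnW ak)); by [].
move=> x /mapP [m]; rewrite mem_iota => /andP [_ mk] ->.
apply: (iter_dec jV H); lia.
Qed.

Lemma anc_unfold i j : ancestor V p i j =
  [&& j \in V, j != r & (p j == i) || ancestor V p i (p j)].
Proof.
rewrite /ancestor; case jV: (j \in V) => //=.
apply/idP/idP.
- case/hasP => k; rewrite mem_iota => /andP [k1 kV] /andP [/eqP ik /allP Hall].
  have j0 : j != r.
    by have := Hall 0; rewrite mem_iota leq0n add0n; apply.
  rewrite j0 /=; case: k k1 kV ik Hall => [//|k] _ kV ik Hall.
  case: k kV ik Hall => [|k] kV ik Hall; first by rewrite /= in ik; rewrite ik eqxx.
  apply/orP; right; rewrite (par_in jV j0) /=; apply/hasP; exists k.+1.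
    rewrite mem_iota; lia.
  apply/andP; split; first by rewrite -iterSr ik.
  apply/allP => m; rewrite mem_iota => /andP [_ mk]; rewrite -iterSr.
  apply: Hall; rewrite mem_iota; lia.
- case/andP => j0 /orP [/eqP pi|].
    apply/hasP; exists 1.
      rewrite mem_iota /= add1n ltnS -has_predT; apply/hasP; by exists j.
    by rewrite /= pi eqxx /= j0.
  case/andP => pjV /hasP [k]; rewrite mem_iota => /andP [k1 kV] /andP [/eqP ik /allP Hall].
  have Hfull : forall m, m < k.+1 -> iter m p j != r.
    case=> [//|m] mk; rewrite iterSr; apply: Hall; rewrite mem_iota; lia.
  apply/hasP; exists k.+1.
    have := iter_bound jV Hfull; rewrite mem_iota; lia.
  apply/andP; split; first by rewrite iterSr ik.
  apply/allP => m; rewrite mem_iota => /andP [_ mk]; apply: Hfull; lia.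
Qed.

Lemma anc_lt i j : ancestor V p i j -> i < j.
Proof.
elim/ltn_ind: j => j IH; rewrite anc_unfold => /and3P [jV j0 /orP [/eqP <-|H]].
  exact: par_lt.
apply: ltn_trans (par_lt jV j0); exact: IH (par_lt jV j0) H.
Qed.

Lemma anc_in i j : ancestor V p i j -> i \in V.
Proof.
elim/ltn_ind: j => j IH; rewrite anc_unfold => /and3P [jV j0 /orP [/eqP <-|H]].
  exact: par_in.
exact: IH (par_lt jV j0) H.
Qed.

Lemma anc_root x : x \in V -> x != r -> ancestor V p r x.
Proof.
elim/ltn_ind: x => x IH xV x0; rewrite anc_unfold xV x0 /=.
have [->|ne] := eqVneq (p x) r; first by [].
by rewrite IH ?orbT ?par_lt ?par_in.
Qed.

Lemma anc_par x v : ancestor V p x v -> x != r -> ancestor V p (p x) v.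
Proof.
elim/ltn_ind: v => v IH; rewrite (anc_unfold x) => /and3P [vV v0 /orP [/eqP px|H]] x0.
  have xV : x \in V by rewrite -px par_in.
  by rewrite anc_unfold vV v0 /= px anc_unfold xV x0 eqxx !orbT.
by rewrite anc_unfold vV v0 IH ?orbT // par_lt.
Qed.

Lemma anc_lin v c j : (ancestor V p c v || (c == v)) ->
  (ancestor V p j v || (j == v)) -> c < j -> ancestor V p c j.
Proof.
elim/ltn_ind: v c j => v IH c j.
case/orP => [Hc|/eqP ->]; last first.
  move=> Hj vj; case/orP: Hj => [/anc_lt H|/eqP H]; lia.
case/orP => [Hj|/eqP ->] cj; last by [].
move: Hc Hj; rewrite (anc_unfold c v) (anc_unfold j v) => /and3P [vV v0 Hc] /and3P [_ _ Hj].
apply: (IH (p v)) => //; [exact: par_lt | by rewrite orbC eq_sym | by rewrite orbC eq_sym].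
Qed.

Lemma chain_anc C : chainP V p C -> forall i j, j \in C ->
  ancestor V p i j = (i \in C) && (i < j).
Proof.
move=> [CV rC HC] i; elim/ltn_ind => j IH jC.
rewrite anc_unfold (CV _ jC) /=.
have [jr|j0] := eqVneq j r.
  rewrite /=; case iC: (i \in C) => //=.
  by rewrite jr ltnNge troot_min // CV.
have [pjC Hmax] := HC j jC j0.
rewrite /= IH ?(par_lt (CV _ jC) j0) //.
apply/idP/idP.
  case/orP => [/eqP <-|/andP [iC ipj]]; first by rewrite pjC par_lt // CV.
  by rewrite iC (ltn_trans ipj) // par_lt // CV.
case/andP => iC ij; have := Hmax i iC ij.
rewrite leq_eqVlt => /orP [/eqP ->|->]; by rewrite ?eqxx ?iC ?orbT.
Qed.

Lemma chain_sons C m i : chainP V p C -> m \in C -> (forall c, c \in C -> c <= m) ->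
  count (fun x => [&& x \in C, x != r & p x == i]) V = (i \in C) && (i != m).
Proof.
move=> [CV rC HC] mC Hm.
case E: ((i \in C) && (i != m)); last first.
  apply/eqP; rewrite -leqn0 leqNgt -has_count; apply/hasP => [[x xV /and3P [xC x0 /eqP pxi]]].
  have [pxC _] := HC x xC x0.
  have := par_lt xV x0; have := Hm x xC.
  move: E; rewrite -pxi pxC /= => /negbFE/eqP ->; lia.
case/andP: E => iC im.
have exP : exists n, (n \in C) && (i < n).
  exists m; rewrite mC /= ltn_neqAle im Hm //.
case: (ex_minnP exP) => x /andP [xC ix] xmin.
have x0 : x != r.
  apply/eqP => e; have := troot_min (CV _ iC); lia.
have [pxC Hmx] := HC x xC x0.
have pxi : p x = i.
  apply/eqP; rewrite eqn_leq Hmx // andbT leqNgt; apply/negP => ipx.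
  have := xmin (p x); rewrite pxC ipx => /(_ isT).
  have := par_lt (CV _ xC) x0; lia.
rewrite (@eq_in_count _ _ (pred1 x)); first by rewrite count_uniq_mem ?uniqV ?CV.
move=> y yV /=; apply/idP/idP.
  case/and3P => yC y0 /eqP pyi.
  have [pyC Hmy] := HC y yC y0.
  case: (ltngtP x y) => // [xy|yx].
    have := Hmy x xC xy; have := par_lt (CV _ xC) x0; lia.
  have := Hmx y yC yx; have := par_lt (CV _ yC) y0; lia.
by move/eqP ->; rewrite xC x0 pxi eqxx.
Qed.

Lemma chain_mem v x : (x \in chain V p v) = (x \in V) && (ancestor V p x v || (x == v)).
Proof. by rewrite /chain mem_filter andbC. Qed.

Lemma chain_chainP v : v \in V -> chainP V p (chain V p v).
Proof.
move=> vV; split.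
- by move=> x; rewrite chain_mem => /andP [].
- rewrite chain_mem root_in /=; have [->|ne] := eqVneq r v; first by rewrite orbT.
  by rewrite anc_root // eq_sym.
move=> j; rewrite !chain_mem => /andP [jV Hj] j0; split.
  rewrite par_in //=; case/orP: Hj => [H|/eqP jv]; first by rewrite anc_par.
  subst j; by rewrite anc_unfold vV j0 eqxx.
move=> c; rewrite chain_mem => /andP [cV Hc] cj.
move: (anc_lin Hc Hj cj); rewrite anc_unfold => /and3P [_ _ /orP [/eqP ->|/anc_lt/ltnW]] //.
Qed.

Lemma chain_max v x : x \in chain V p v -> x <= v.
Proof. by rewrite chain_mem => /andP [_ /orP [/anc_lt/ltnW|/eqP->]]. Qed.

Lemma chain_v v : v \in V -> v \in chain V p v.
Proof. by move=> vV; rewrite chain_mem vV eqxx orbT. Qed.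

Lemma par_anc_max x : x \in V -> x != r ->
  ancestor V p (p x) x /\ forall i, ancestor V p i x -> i <= p x.
Proof.
move=> xV x0; split; first by rewrite anc_unfold xV x0 eqxx.
move=> i; rewrite anc_unfold => /and3P [_ _ /orP [/eqP ->|/anc_lt/ltnW]] //.
Qed.

End Tree.


Lemma embed_anc V p C U q D : is_inc_tree V p -> is_inc_tree U q ->
  chainP V p C -> chainP U q D -> {subset V <= U} ->
  (forall x, x \in V -> (x \in D) = (x \in C)) ->
  (forall x, x \in V -> x \notin C -> q x = p x) ->
  forall i j, i \in V -> j \in V -> ancestor V p i j = ancestor U q i j.
Proof.
move=> HV HU cC cD VU DC qp i j iV; elim/ltn_ind: j => j IH jV.
case jC: (j \in C).
  rewrite (chain_anc HV cC) // (chain_anc HU cD) ?DC //.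
have jr : j != troot V.
  by case: cC => _ rC _; apply/eqP => e; rewrite -e jC in rC.
have jrU : j != troot U.
  by case: cD => _ rD _; apply/eqP => e; rewrite -e DC // jC in rD.
have pjV := par_in HV jV jr; have pjl := par_lt HV jV jr.
by rewrite (anc_unfold HV) (anc_unfold HU) jV jr (VU _ jV) jrU /= qp ?jC // IH.
Qed.

Lemma anc_ext V p q : is_inc_tree V p -> is_inc_tree V q ->
  (forall x, x \in V -> x != troot V -> p x = q x) ->
  forall i j, ancestor V p i j = ancestor V q i j.
Proof.
move=> Hp Hq E i; elim/ltn_ind => j IH.
rewrite (anc_unfold Hp) (anc_unfold Hq).
case jV: (j \in V) => //=; case j0: (j != troot V) => //=.
by rewrite E // IH // -(E _ jV j0) (par_lt Hp).
Qed.

Lemma count_split (T : Type) (a b : pred T) s :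
  count a s = count (fun x => ~~ b x && a x) s + count (fun x => b x && a x) s.
Proof.
elim: s => //= x s ->; case: (b x); case: (a x) => /=; lia.
Qed.

Lemma bigmax_below (s : seq nat) x :
  (\max_(c <- s | c < x) c == 0) ||
  ((\max_(c <- s | c < x) c \in s) && (\max_(c <- s | c < x) c < x)).
Proof.
elim: s => [|a s IH]; first by rewrite big_nil.
rewrite big_cons; case: ifP => ax; last first.
  by case/orP: IH => [->//|/andP [H1 H2]]; rewrite inE H1 H2 !orbT.
move: IH; set M := \max_(c <- s | c < x) c => IH.
rewrite /maxn; case: ifP => aM; last by rewrite inE eqxx ax !orbT.
case/orP: IH => [/eqP M0|/andP [H1 H2]]; first by rewrite M0 in aM.
by rewrite inE H1 H2 !orbT.
Qed.

Lemma NC_split (V : seq nat) (p : nat -> nat) (C : seq nat) (i : nat) : sons V p i =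
  count (fun x => [&& x \notin C, x != troot V & p x == i]) V +
  count (fun x => [&& x \in C, x != troot V & p x == i]) V.
Proof. exact: (count_split _ (fun x => x \in C)). Qed.

Lemma recover V p q : is_inc_tree V p -> is_inc_tree V q ->
  (forall i j, i \in V -> j \in V -> ancestor V q i j = ancestor V p i j) ->
  forall x, x \in V -> x != troot V -> q x = p x.
Proof.
move=> Hp Hq K x xV x0.
have [ap mp] := par_anc_max Hp xV x0; have [aq mq] := par_anc_max Hq xV x0.
apply/eqP; rewrite eqn_leq; apply/andP; split.
  by apply: mp; rewrite -K // (par_in Hq).
by apply: mq; rewrite K // (par_in Hp).
Qed.

Section Splice.
Variables (V1 : seq nat) (p1 : nat -> nat) (V2 : seq nat) (p2 : nat -> nat) (v1 v2 : nat).
Hypotheses (H1 : is_inc_tree V1 p1) (H2 : is_inc_tree V2 p2)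
  (Hd : disjoint_seq V1 V2) (v1V : v1 \in V1) (v2V : v2 \in V2).
Local Notation C1 := (chain V1 p1 v1).
Local Notation C2 := (chain V2 p2 v2).
Local Notation C := (chain V1 p1 v1 ++ chain V2 p2 v2).
Local Notation VR := (spl_vert V1 V2).
Local Notation pR := (spl_par V1 p1 v1 V2 p2 v2).

Lemma disj x : x \in V1 -> x \in V2 -> False.
Proof. by move=> x1 x2; move/allP: Hd => /(_ x x1); rewrite x2. Qed.

Lemma C1V : {subset C1 <= V1}. Proof. by case: (chain_chainP H1 v1V). Qed.
Lemma C2V : {subset C2 <= V2}. Proof. by case: (chain_chainP H2 v2V). Qed.

Lemma pR_C x : x \in C -> pR x = \max_(c <- C | c < x) c.
Proof. by move=> xC; rewrite /spl_par /= xC. Qed.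
Lemma pR_1 x : x \in V1 -> x \notin C -> pR x = p1 x.
Proof. by move=> xV xC; rewrite /spl_par /= (negbTE xC) xV. Qed.
Lemma pR_2 x : x \in V2 -> x \notin C -> pR x = p2 x.
Proof.
move=> xV xC; rewrite /spl_par /= (negbTE xC).
by case: ifP => // x1; case: (disj x1 xV).
Qed.

Lemma C_mem1 x : x \in V1 -> (x \in C) = (x \in C1).
Proof.
move=> xV; rewrite mem_cat; case: (x \in C1) => //=.
by apply/negP => /C2V; apply: disj.
Qed.
Lemma C_mem2 x : x \in V2 -> (x \in C) = (x \in C2).
Proof.
move=> xV; rewrite mem_cat; case E: (x \in C1) => //=.
by case: (disj (C1V E) xV).
Qed.

Lemma C_sub : {subset C <= VR}.
Proof.
by move=> x; rewrite /spl_vert !mem_cat => /orP [/C1V ->|/C2V ->]; rewrite ?orbT.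
Qed.

Lemma VR_nil : VR != [::].
Proof.
have h : troot V1 \in V1 ++ V2 by rewrite mem_cat (root_in H1).
by rewrite /spl_vert; case: (V1 ++ V2) h.
Qed.

Lemma rR_C : troot VR \in C.
Proof.
have : troot VR \in VR by apply: troot_in VR_nil.
rewrite {2}/spl_vert mem_cat => /orP [h|h].
  have -> : troot VR = troot V1.
    apply/eqP; rewrite eqn_leq troot_min ?troot_min //.
    by rewrite /spl_vert mem_cat (root_in H1).
  by rewrite mem_cat; case: (chain_chainP H1 v1V) => _ -> _.
have -> : troot VR = troot V2.
  apply/eqP; rewrite eqn_leq troot_min ?troot_min //.
  by rewrite /spl_vert mem_cat (root_in H2) ?orbT.
by rewrite mem_cat; case: (chain_chainP H2 v2V) => _ -> _; rewrite orbT.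
Qed.

Lemma pR_chain x : x \in C -> x != troot VR ->
  [/\ pR x \in C, pR x < x & forall c, c \in C -> c < x -> c <= pR x].
Proof.
move=> xC x0; rewrite pR_C //.
have rx : troot VR < x by rewrite ltn_neqAle eq_sym x0 troot_min // C_sub.
have sup : forall c, c \in C -> c < x -> c <= \max_(c <- C | c < x) c.
  by move=> c cC cx; apply: (@leq_bigmax_seq _ C (fun c => c < x) (fun c => c) c cC cx).
case/orP: (bigmax_below C x) => [/eqP M0|/andP [H3 H4]]; last by split.
have r0 : troot VR = 0 by have := sup _ rR_C rx; rewrite M0; lia.
rewrite M0; split; [by rewrite -r0 rR_C | lia | by move=> c cC cx; rewrite -M0; apply: sup].
Qed.

Lemma spl_inc : is_inc_tree VR pR.
Proof.
split; first exact: VR_nil.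
  rewrite /spl_vert cat_uniq (uniqV H1) (uniqV H2) /= andbT.
  by apply/hasP => [[x xV2 xV1]]; apply: (disj xV1 xV2).
move=> x xR x0; case xC: (x \in C).
  by case: (pR_chain xC x0) => h1 h2 _; rewrite C_sub.
move: xR; rewrite {1}/spl_vert mem_cat => /orP [xV|xV].
  have xr : x != troot V1.
    apply/eqP => e; move: xC; rewrite mem_cat e.
    by case: (chain_chainP H1 v1V) => _ -> _.
  rewrite pR_1 ?xC // /spl_vert mem_cat (par_in H1) ?(par_lt H1) //.
have xr : x != troot V2.
  apply/eqP => e; move: xC; rewrite mem_cat e.
  by case: (chain_chainP H2 v2V) => _ -> _; rewrite orbT.
rewrite pR_2 ?xC // /spl_vert mem_cat (par_in H2) ?(par_lt H2) ?orbT //.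
Qed.

Lemma spl_chainP : chainP VR pR C.
Proof.
split; [exact: C_sub | exact: rR_C |].
by move=> j jC j0; case: (pR_chain jC j0) => h1 _ h3.
Qed.

Lemma partA1 i j : i \in V1 -> j \in V1 -> ancestor V1 p1 i j = ancestor VR pR i j.
Proof.
apply: (embed_anc H1 spl_inc (chain_chainP H1 v1V) spl_chainP).
- by move=> x xV; rewrite /spl_vert mem_cat xV.
- exact: C_mem1.
by move=> x xV xC; rewrite pR_1 // C_mem1.
Qed.

Lemma partA2 i j : i \in V2 -> j \in V2 -> ancestor V2 p2 i j = ancestor VR pR i j.
Proof.
apply: (embed_anc H2 spl_inc (chain_chainP H2 v2V) spl_chainP).
- by move=> x xV; rewrite /spl_vert mem_cat xV orbT.
- exact: C_mem2.
by move=> x xV xC; rewrite pR_2 // C_mem2.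
Qed.


Hypothesis v21 : v2 < v1.

Lemma C_max c : c \in C -> c <= v1.
Proof.
rewrite mem_cat => /orP [/(chain_max H1)//|/(chain_max H2) h]; lia.
Qed.

Lemma R_chain_count i :
  count (fun x => [&& x \in C, x != troot VR & pR x == i]) VR = (i \in C) && (i != v1).
Proof.
apply: (chain_sons spl_inc i spl_chainP _ C_max).
by rewrite mem_cat (chain_v p1 v1V).
Qed.

Lemma root1C : troot V1 \in C1.
Proof. by case: (chain_chainP H1 v1V). Qed.
Lemma root2C : troot V2 \in C2.
Proof. by case: (chain_chainP H2 v2V). Qed.

Lemma NC_R1 i : i \in V1 ->
  count (fun x => [&& x \notin C, x != troot VR & pR x == i]) VR =
  count (fun x => [&& x \notin C1, x != troot V1 & p1 x == i]) V1.
Proof.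
move=> iV; rewrite {2}/spl_vert count_cat [X in _ + X](_ : _ = 0) ?addn0.
  apply: eq_in_count => x xV /=; rewrite C_mem1 //; case xC1: (x \in C1) => //=.
  have xr1 : x != troot V1 by apply/eqP => e; rewrite e root1C in xC1.
  have xrR : x != troot VR.
    by apply/eqP => e; move: (rR_C); rewrite -e C_mem1 // xC1.
  by rewrite xr1 xrR pR_1 // C_mem1 // xC1.
apply/eqP; rewrite -leqn0 leqNgt -has_count; apply/hasP => [[x xV /and3P [xC _ /eqP e]]].
have xr2 : x != troot V2 by apply/eqP => e'; move: xC; rewrite C_mem2 // e' root2C.
rewrite pR_2 // in e; have := par_in H2 xV xr2; rewrite e => iV2.
exact: (disj iV iV2).
Qed.

Lemma NC_R2 i : i \in V2 ->
  count (fun x => [&& x \notin C, x != troot VR & pR x == i]) VR =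
  count (fun x => [&& x \notin C2, x != troot V2 & p2 x == i]) V2.
Proof.
move=> iV; rewrite {2}/spl_vert count_cat [X in X + _](_ : _ = 0) ?add0n.
  apply: eq_in_count => x xV /=; rewrite C_mem2 //; case xC2: (x \in C2) => //=.
  have xr2 : x != troot V2 by apply/eqP => e; rewrite e root2C in xC2.
  have xrR : x != troot VR.
    by apply/eqP => e; move: (rR_C); rewrite -e C_mem2 // xC2.
  by rewrite xr2 xrR pR_2 // C_mem2 // xC2.
apply/eqP; rewrite -leqn0 leqNgt -has_count; apply/hasP => [[x xV /and3P [xC _ /eqP e]]].
have xr1 : x != troot V1 by apply/eqP => e'; move: xC; rewrite C_mem1 // e' root1C.
rewrite pR_1 // in e; have := par_in H1 xV xr1; rewrite e => iV1.
exact: (disj iV1 iV).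
Qed.

Lemma sons1 i : i \in V1 -> sons VR pR i = sons V1 p1 i.
Proof.
move=> iV; rewrite (NC_split _ _ C) (NC_split V1 p1 C1) NC_R1 // R_chain_count.
by rewrite (chain_sons H1 i (chain_chainP H1 v1V) (chain_v p1 v1V) (@chain_max _ _ H1 v1)) C_mem1.
Qed.

Lemma sons2 i : i \in V2 -> sons VR pR i = sons V2 p2 i + (i == v2).
Proof.
move=> iV; rewrite (NC_split _ _ C) (NC_split V2 p2 C2) NC_R2 // R_chain_count.
rewrite (chain_sons H2 i (chain_chainP H2 v2V) (chain_v p2 v2V) (@chain_max _ _ H2 v2)) C_mem2 //.
have -> : i != v1 by apply/eqP => e; rewrite e in iV; exact: (disj v1V iV).
have [->|ne] := eqVneq i v2; first by rewrite (chain_v p2 v2V) /=; lia.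
by rewrite andbT addn0.
Qed.

End Splice.


Theorem lemma2p4 (V1 : seq nat) (p1 : nat -> nat) (V2 : seq nat) (p2 : nat -> nat)
    (v1 v2 : nat) :
  is_inc_tree V1 p1 -> is_inc_tree V2 p2 -> disjoint_seq V1 V2 ->
  v1 \in V1 -> v2 \in V2 -> v2 < v1 ->
  let VR := spl_vert V1 V2 in
  let pR := spl_par V1 p1 v1 V2 p2 v2 in
  (* (a) ancestry is preserved, in both trees *)
  ((forall i j, i \in V1 -> j \in V1 -> (ancestor V1 p1 i j <-> ancestor VR pR i j)) /\
   (forall i j, i \in V2 -> j \in V2 -> (ancestor V2 p2 i j <-> ancestor VR pR i j))) /\
  (* (a) consequently, given V1 and V2, T1 and T2 are recovered from R *)
  (forall (q1 q2 : nat -> nat) (w1 w2 : nat),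
     is_inc_tree V1 q1 -> is_inc_tree V2 q2 ->
     w1 \in V1 -> w2 \in V2 -> w2 < w1 ->
     (forall x, x \in VR -> x != troot VR -> spl_par V1 q1 w1 V2 q2 w2 x = pR x) ->
     (forall x, x \in V1 -> x != troot V1 -> q1 x = p1 x) /\
     (forall x, x \in V2 -> x != troot V2 -> q2 x = p2 x)) /\
  (* (b) number of sons *)
  (forall i, i \in V1 -> sons VR pR i = sons V1 p1 i) /\
  sons VR pR v2 = (sons V2 p2 v2).+1 /\
  (forall i, i \in V2 -> i != v2 -> sons VR pR i = sons V2 p2 i).
Proof.
move=> H1 H2 Hd v1V v2V v21 VR pR.
split; [split|split].
- by move=> i j iV jV; rewrite (partA1 H1 H2 Hd v1V v2V iV jV).
- by move=> i j iV jV; rewrite (partA2 H1 H2 Hd v1V v2V iV jV).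
- move=> q1 q2 w1 w2 G1 G2 w1V w2V w21 E.
  have HR := spl_inc H1 H2 Hd v1V v2V.
  have HR' := spl_inc G1 G2 Hd w1V w2V.
  have AE := anc_ext HR' HR E.
  split.
    apply: (recover H1 G1) => i j iV jV.
    by rewrite (partA1 G1 G2 Hd w1V w2V iV jV) AE -(partA1 H1 H2 Hd v1V v2V iV jV).
  apply: (recover H2 G2) => i j iV jV.
  by rewrite (partA2 G1 G2 Hd w1V w2V iV jV) AE -(partA2 H1 H2 Hd v1V v2V iV jV).
split; first exact: (sons1 H1 H2 Hd v1V v2V v21).
split; first by rewrite (sons2 H1 H2 Hd v1V v2V v21 v2V) eqxx addn1.
move=> i iV iv; rewrite (sons2 H1 H2 Hd v1V v2V v21 iV).
by rewrite (negbTE iv) addn0.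
Qed.
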